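(* The attraction basin $\mathcal A$ of $x_0$ is invariant under the auxiliary flow: if $x\in\mathcal A$ and $(x,t)\in D_\Phi$ then $\Phi(x,t)\in\mathcal A$. The boundary $\partial\mathcal A$ of $\mathcal A$ relative to $D$ is also invariant in the same sense. Moreover, for every $x\in\partial\mathcal A$ the trajectory through $x$ is not global in the future.
   Context: Standing setting: $X,Y$ are real Banach spaces, $D\subseteq X$ is a nonempty open connected set, $f:D\to Y$ is a local homeomorphism (every point has an open neighbourhood mapped homeomorphically onto an open set), $x_0\in D$, $y_0=f(x_0)$. A flow in $D$ is a map $\Phi:D_\Phi\to D$ such that: (i) $D_\Phi$ is an open subset of $D\times\mathbb R$ and $\Phi$ is continuous; (ii) for each $x\in D$, $\{t:(x,t)\in D_\Phi\}$ is an interval containing $0$; (iii) $\Phi(x,0)=x$; (iv) if $(x,t_1),(x,t_1+t_2)\in D_\Phi$ then $(\Phi(x,t_1),t_2)\in D_\Phi$ and $\Phi(\Phi(x,t_1),t_2)=\Phi(x,t_1+t_2)$. The trajectory through $x$ is global in the future if $\{x\}\times[0,+\infty)\subseteq D_\Phi$. Let $\Psi(y,t)=y_0+e^{-t}(y-y_0)$ for $y\in Y,t\in\mathbb R$. The auxiliary flow $\Phi$ is the unique flow in $D$ of maximal domain with $f(\Phi(x,t))=\Psi(f(x),t)$ for all $(x,t)\in D_\Phi$; for each $x$, $t\mapsto\Phi(x,t)$ is the maximal continuous lifting by $f$ of $t\mapsto\Psi(f(x),t)$ through $x$ at $t=0$. The attraction basin $\mathcal A$ of $x_0$ is the set of $x\in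 D$ whose trajectory is global in the future and satisfies $\Phi(x,t)\to x_0$ as $t\to+\infty$. *)

(* Defs.v *)
From Stdlib Require Import Reals.
Open Scope R_scope.

Record Banach := {
  bcar :> Type;
  bzero : bcar;
  badd : bcar -> bcar -> bcar;
  bopp : bcar -> bcar;
  bscal : R -> bcar -> bcar;
  bnorm : bcar -> R;
  badd_assoc : forall x y z, badd x (badd y z) = badd (badd x y) z;
  badd_comm : forall x y, badd x y = badd y x;
  badd_zero : forall x, badd x bzero = x;
  badd_opp : forall x, badd x (bopp x) = bzero;
  bscal_assoc : forall a b x, bscal a (bscal b x) = bscal (a * b) x;
  bscal_one : forall x, bscal 1 x = x;
  bscal_distr_l : forall a x y, bscal a (badd x y) = badd (bscal a x) (bscal a y);
  bscal_distr_r : forall a b x, bscal (a + b) x = badd (bscal a x) (bscal b x);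
  bnorm_sep : forall x, bnorm x = 0 -> x = bzero;
  bnorm_scal : forall a x, bnorm (bscal a x) = Rabs a * bnorm x;
  bnorm_triangle : forall x y, bnorm (badd x y) <= bnorm x + bnorm y;
  bcomplete : forall u : nat -> bcar,
    (forall eps, eps > 0 -> exists N, forall m n, (m >= N)%nat -> (n >= N)%nat ->
        bnorm (badd (u m) (bopp (u n))) < eps) ->
    exists l, forall eps, eps > 0 -> exists N, forall n, (n >= N)%nat ->
        bnorm (badd (u n) (bopp l)) < eps
}.

Arguments bzero {_}. Arguments badd {_}. Arguments bopp {_}.
Arguments bscal {_}. Arguments bnorm {_}.

Definition dist {X : Banach} (x y : X) : R := bnorm (badd x (bopp y)).

Definition is_open {X : Banach} (U : X -> Prop) : Prop :=
  forall x, U x -> exists eps, eps > 0 /\ forall z, dist z x < eps -> U z.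

Definition is_open_XR {X : Banach} (W : X -> R -> Prop) : Prop :=
  forall x t, W x t -> exists eps, eps > 0 /\
    forall z s, dist z x < eps -> Rabs (s - t) < eps -> W z s.

Definition connected {X : Banach} (D : X -> Prop) : Prop :=
  forall U V : X -> Prop, is_open U -> is_open V ->
    (forall x, D x -> U x \/ V x) ->
    (forall x, D x -> U x -> V x -> False) ->
    (forall x, D x -> U x) \/ (forall x, D x -> V x).

Definition cont_on {X Y : Banach} (S : X -> Prop) (g : X -> Y) : Prop :=
  forall x, S x -> forall eps, eps > 0 -> exists delta, delta > 0 /\
    forall z, S z -> dist z x < delta -> dist (g z) (g x) < eps.

Definition local_homeo {X Y : Banach} (D : X -> Prop) (f : X -> Y) : Prop :=
  forall x, D x -> exists (U : X -> Prop) (V : Y -> Prop) (g : Y -> X),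
    is_open U /\ U x /\ (forall z, U z -> D z) /\ is_open V /\
    (forall z, U z -> V (f z)) /\ (forall y, V y -> U (g y)) /\
    (forall z, U z -> g (f z) = z) /\ (forall y, V y -> f (g y) = y) /\
    cont_on U f /\ cont_on V g.

(* Flow in D: Phi is only meaningful on its domain DPhi. *)
Definition is_flow {X : Banach} (D : X -> Prop)
    (DPhi : X -> R -> Prop) (Phi : X -> R -> X) : Prop :=
  (forall x t, DPhi x t -> D x) /\
  (forall x t, DPhi x t -> D (Phi x t)) /\
  is_open_XR DPhi /\
  (forall x t, DPhi x t -> forall eps, eps > 0 -> exists delta, delta > 0 /\
     forall z s, DPhi z s -> dist z x < delta -> Rabs (s - t) < delta ->
       dist (Phi z s) (Phi x t) < eps) /\
  (forall x, D x -> DPhi x 0) /\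
  (forall x t1 t2 s, DPhi x t1 -> DPhi x t2 -> t1 <= s <= t2 -> DPhi x s) /\
  (forall x, D x -> Phi x 0 = x) /\
  (forall x t1 t2, DPhi x t1 -> DPhi x (t1 + t2) ->
     DPhi (Phi x t1) t2 /\ Phi (Phi x t1) t2 = Phi x (t1 + t2)).

Definition Psi {Y : Banach} (y0 : Y) (y : Y) (t : R) : Y :=
  badd y0 (bscal (exp (- t)) (badd y (bopp y0))).

Definition interval0 (J : R -> Prop) : Prop :=
  J 0 /\ forall a b s, J a -> J b -> a <= s <= b -> J s.

(* The auxiliary flow: a flow in D with f(Phi(x,t)) = Psi(f x, t) on its
   domain, and such that for each x, t |-> Phi(x,t) is the maximal
   continuous lifting of t |-> Psi(f x, t) through x at t = 0: every
   continuous lifting defined on an interval containing 0 is defined on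
   a sub-interval of the trajectory domain. *)
Definition aux_flow {X Y : Banach} (D : X -> Prop) (f : X -> Y) (y0 : Y)
    (DPhi : X -> R -> Prop) (Phi : X -> R -> X) : Prop :=
  is_flow D DPhi Phi /\
  (forall x t, DPhi x t -> f (Phi x t) = Psi y0 (f x) t) /\
  (forall x, D x -> forall (J : R -> Prop) (gam : R -> X),
     interval0 J -> gam 0 = x ->
     (forall t, J t -> D (gam t)) ->
     (forall t, J t -> forall eps, eps > 0 -> exists delta, delta > 0 /\
        forall s, J s -> Rabs (s - t) < delta -> dist (gam s) (gam t) < eps) ->
     (forall t, J t -> f (gam t) = Psi y0 (f x) t) ->
     forall t, J t -> DPhi x t).

Definition global_future {X : Banach} (DPhi : X -> R -> Prop) (x : X) : Prop :=
  forall t, 0 <= t -> DPhi x t.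

Definition attraction_basin {X : Banach} (D : X -> Prop)
    (DPhi : X -> R -> Prop) (Phi : X -> R -> X) (x0 : X) (x : X) : Prop :=
  D x /\ global_future DPhi x /\
  forall eps, eps > 0 -> exists T, forall t, t >= T -> dist (Phi x t) x0 < eps.

Definition rel_boundary {X : Banach} (D A : X -> Prop) (x : X) : Prop :=
  D x /\
  (forall eps, eps > 0 -> exists a, A a /\ dist a x < eps) /\
  (forall eps, eps > 0 -> exists z, D z /\ ~ A z /\ dist z x < eps).

(* Main.v *)
Require Import Defs.
From Stdlib Require Import Reals Lra Classical.
Open Scope R_scope.
Local Notation dist := Defs.dist.

Lemma b_add0l {X : Banach} (x : X) : badd bzero x = x.
Proof. rewrite badd_comm; apply badd_zero. Qed.

Lemma b_opp_unique {X : Banach} (x y : X) : badd x y = bzero -> y = bopp x.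
Proof.
  intro H. rewrite <- (badd_zero _ y), <- (badd_opp _ x), badd_assoc.
  rewrite (badd_comm _ y x), H. apply b_add0l.
Qed.

Lemma b_scal0 {X : Banach} (x : X) : bscal 0 x = bzero.
Proof.
  assert (H : bscal 0 x = badd (bscal 0 x) (bscal 0 x)).
  { rewrite <- bscal_distr_r. f_equal. ring. }
  assert (H2 : badd (bscal 0 x) (bopp (bscal 0 x)) = bzero) by apply badd_opp.
  rewrite H in H2 at 1. rewrite <- badd_assoc, badd_opp, badd_zero in H2. exact H2.
Qed.

Lemma b_opp_scal {X : Banach} (x : X) : bopp x = bscal (-1) x.
Proof.
  symmetry. apply b_opp_unique.
  rewrite <- (bscal_one _ x) at 1. rewrite <- bscal_distr_r.
  replace (1 + -1) with 0 by ring. apply b_scal0.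
Qed.

Lemma b_opp_scal' {X : Banach} (c : R) (x : X) : bopp (bscal c x) = bscal (- c) x.
Proof. rewrite b_opp_scal, bscal_assoc. f_equal. ring. Qed.

Lemma b_norm_opp {X : Banach} (x : X) : bnorm (bopp x) = bnorm x.
Proof. rewrite b_opp_scal, bnorm_scal. replace (Rabs (-1)) with 1. ring.
  rewrite Rabs_left; lra. Qed.

Lemma b_norm0 {X : Banach} : bnorm (@bzero X) = 0.
Proof. rewrite <- (b_scal0 bzero), bnorm_scal, Rabs_R0. ring. Qed.

Lemma b_norm_nonneg {X : Banach} (x : X) : 0 <= bnorm x.
Proof.
  pose proof (bnorm_triangle _ x (bopp x)) as H.
  rewrite badd_opp, b_norm0, b_norm_opp in H. lra.
Qed.

Lemma b_opp_add {X : Banach} (a b : X) : bopp (badd a b) = badd (bopp a) (bopp b).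
Proof. rewrite !b_opp_scal. apply bscal_distr_l. Qed.

Lemma b_opp_opp {X : Banach} (a : X) : bopp (bopp a) = a.
Proof. symmetry. apply b_opp_unique. rewrite badd_comm. apply badd_opp. Qed.

Lemma dist_sym {X : Banach} (x y : X) : dist x y = dist y x.
Proof.
  unfold dist. rewrite <- b_norm_opp, b_opp_add, b_opp_opp, badd_comm. reflexivity.
Qed.

Lemma dist_tri {X : Banach} (x y z : X) : dist x z <= dist x y + dist y z.
Proof.
  unfold dist. eapply Rle_trans; [|apply bnorm_triangle].
  right. f_equal.
  rewrite <- badd_assoc. f_equal. rewrite badd_assoc, (badd_comm _ (bopp y) y), badd_opp.
  rewrite b_add0l. reflexivity.
Qed.

Lemma dist_self {X : Banach} (x : X) : dist x x = 0.
Proof. unfold dist. rewrite badd_opp. apply b_norm0. Qed.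

Lemma dist_nonneg {X : Banach} (x y : X) : 0 <= dist x y.
Proof. apply b_norm_nonneg. Qed.

Lemma dist_eq0 {X : Banach} (x y : X) : dist x y = 0 -> x = y.
Proof.
  unfold dist. intro H. apply bnorm_sep in H.
  apply b_opp_unique in H. rewrite <- (b_opp_opp y), H, b_opp_opp. reflexivity.
Qed.

Lemma b_add_sub_l {X : Banach} (a w : X) : badd (badd a w) (bopp a) = w.
Proof. rewrite (badd_comm _ a w), <- badd_assoc, badd_opp, badd_zero. reflexivity. Qed.

Lemma b_sub_shift {X : Banach} (a u v : X) :
  badd (badd a u) (bopp (badd a v)) = badd u (bopp v).
Proof.
  rewrite b_opp_add, badd_assoc. f_equal.
  rewrite (badd_comm _ a u), <- badd_assoc, badd_opp, badd_zero. reflexivity.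
Qed.

Lemma Psi_sub_y0 {Y : Banach} (y0 y : Y) t :
  badd (Psi y0 y t) (bopp y0) = bscal (exp (- t)) (badd y (bopp y0)).
Proof. unfold Psi. apply b_add_sub_l. Qed.

Lemma dist_Psi_y0 {Y : Banach} (y0 y : Y) t :
  dist (Psi y0 y t) y0 = exp (- t) * dist y y0.
Proof.
  unfold dist. rewrite Psi_sub_y0, bnorm_scal, Rabs_right. reflexivity.
  left; apply exp_pos.
Qed.

Lemma Psi_0 {Y : Banach} (y0 y : Y) : Psi y0 y 0 = y.
Proof.
  unfold Psi. rewrite Ropp_0, exp_0, bscal_one, badd_comm, <- badd_assoc.
  rewrite (badd_comm _ (bopp y0)), badd_opp, badd_zero. reflexivity.
Qed.

Lemma Psi_comp {Y : Banach} (y0 y : Y) t s :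
  Psi y0 (Psi y0 y t) s = Psi y0 y (t + s).
Proof.
  unfold Psi at 1. rewrite Psi_sub_y0, bscal_assoc, <- exp_plus.
  unfold Psi. do 3 f_equal. ring.
Qed.

Lemma dist_Psi_Psi {Y : Banach} (y0 y : Y) s t :
  dist (Psi y0 y s) (Psi y0 y t) = Rabs (exp (- s) - exp (- t)) * dist y y0.
Proof.
  unfold dist, Psi. rewrite b_sub_shift, b_opp_scal', <- bscal_distr_r, bnorm_scal.
  reflexivity.
Qed.

Lemma expneg_cont t eps : eps > 0 -> exists delta, delta > 0 /\
  forall s, Rabs (s - t) < delta -> Rabs (exp (- s) - exp (- t)) < eps.
Proof.
  intro He.
  assert (Hc : continuity_pt (fun s => exp (- s)) t).
  { apply (continuity_pt_comp Ropp exp). apply continuity_pt_opp, derivable_continuous_pt, derivable_pt_id.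
    apply derivable_continuous_pt, derivable_exp. }
  destruct (Hc eps He) as [d [Hd H]]. exists d; split; [exact Hd|].
  intros s Hs. destruct (Req_dec s t) as [->|Hne].
  - unfold Rminus; rewrite Rplus_opp_r, Rabs_R0; lra.
  - apply (H s). split. split; [exact I| auto]. exact Hs.
Qed.
Lemma conn_fwd (P : R -> Prop) a b : a <= b -> P a ->
 (forall t, a <= t <= b -> P t -> exists d, d > 0 /\
     forall s, a <= s <= b -> Rabs (s - t) < d -> P s) ->
 (forall t, a <= t <= b -> (forall d, d > 0 -> exists s, a <= s <= b /\ Rabs (s - t) < d /\ P s) -> P t) ->
 P b.
Proof.
  intros Hab Pa Hop Hcl.
  set (E := fun s => a <= s <= b /\ forall u, a <= u <= s -> P u).
  assert (Eb : bound E) by (exists b; intros s [Hs _]; lra).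
  assert (Ea : exists x, E x).
  { exists a. split; [lra|]. intros u Hu. replace u with a by lra. exact Pa. }
  destruct (completeness E Eb Ea) as [c [Hub Hlub]].
  assert (Hac : a <= c) by (apply Hub; destruct Ea as [x Hx]; split; [lra|];
     intros u Hu; replace u with a by lra; exact Pa).
  assert (Hcb : c <= b) by (apply Hlub; intros s [Hs _]; lra).
  assert (H1 : forall u, a <= u < c -> P u).
  { intros u Hu. destruct (classic (exists s, E s /\ u < s)) as [[s [[Hs1 Hs2] Hus]]|Hn].
    - apply Hs2; lra.
    - exfalso. assert (c <= u); [|lra]. apply Hlub. intros s Es.
      destruct (Rle_dec s u) as [|Hsu]; [lra|]. exfalso; apply Hn; exists s; split; [exact Es|lra]. }
  assert (Pc : P c).
  { apply Hcl; [lra|]. intros d Hd. destruct (Req_dec c a) as [Hca|Hca].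
    - exists a. split; [lra|]. split. rewrite Hca; unfold Rminus; rewrite Rplus_opp_r, Rabs_R0; lra. exact Pa.
    - exists (Rmax a (c - d/2)). assert (a <= Rmax a (c - d/2) < c).
      { split. apply Rmax_l. apply Rmax_lub_lt; lra. }
      split; [lra|]. split. rewrite Rabs_left; [|lra]. pose proof (Rmax_r a (c - d/2)); lra.
      apply H1; lra. }
  destruct (Req_dec c b) as [<-|Hcb']; [exact Pc|].
  destruct (Hop c ltac:(lra) Pc) as [d [Hd Hs]].
  set (s := Rmin b (c + d/2)).
  assert (Hs1 : c < s) by (unfold s; apply Rmin_glb_lt; lra).
  assert (Hs2 : s <= b) by apply Rmin_l.
  assert (Hs3 : s <= c + d/2) by apply Rmin_r.
  assert (E s).
  { split; [lra|]. intros u Hu. destruct (Rlt_le_dec u c).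
    - apply H1; lra.
    - apply Hs; [lra|]. rewrite Rabs_right; lra. }
  pose proof (Hub s H). lra.
Qed.

Lemma conn_bwd (P : R -> Prop) a b : a <= b -> P b ->
 (forall t, a <= t <= b -> P t -> exists d, d > 0 /\
     forall s, a <= s <= b -> Rabs (s - t) < d -> P s) ->
 (forall t, a <= t <= b -> (forall d, d > 0 -> exists s, a <= s <= b /\ Rabs (s - t) < d /\ P s) -> P t) ->
 P a.
Proof.
  intros Hab Pb Hop Hcl.
  pose (Q := fun s => P (a + b - s)).
  cut (Q b). { unfold Q; replace (a + b - b) with a by ring; auto. }
  apply (conn_fwd Q a b Hab).
  - unfold Q; replace (a + b - a) with b by ring; exact Pb.
  - intros t Ht Qt. destruct (Hop (a + b - t) ltac:(lra) Qt) as [d [Hd H]].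
    exists d; split; [exact Hd|]. intros s Hs Hst. apply H; [lra|].
    replace (a + b - s - (a + b - t)) with (- (s - t)) by ring. rewrite Rabs_Ropp; exact Hst.
  - intros t Ht H. apply Hcl; [lra|]. intros d Hd. destruct (H d Hd) as [s [Hs [Hst Qs]]].
    exists (a + b - s). split; [lra|]. split; [|exact Qs].
    replace (a + b - s - (a + b - t)) with (- (s - t)) by ring. rewrite Rabs_Ropp; exact Hst.
Qed.

Lemma flow_tcont {X : Banach} (D : X -> Prop) DPhi Phi x t eps :
  is_flow D DPhi Phi -> DPhi x t -> eps > 0 -> exists d, d > 0 /\
  forall s, DPhi x s -> Rabs (s - t) < d -> dist (Phi x s) (Phi x t) < eps.
Proof.
  intros [_ [_ [_ [Hc _]]]] Hx He. destruct (Hc x t Hx eps He) as [d [Hd H]].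
  exists d; split; [exact Hd|]. intros s Hs Hst. apply H; auto. rewrite dist_self; lra.
Qed.

Lemma part1 {X : Banach} (D : X -> Prop) DPhi Phi x0 x t :
  is_flow D DPhi Phi -> attraction_basin D DPhi Phi x0 x -> DPhi x t ->
  attraction_basin D DPhi Phi x0 (Phi x t).
Proof.
  intros Hf [Dx [Hg Hconv]] Hxt.
  destruct Hf as [HD1 [HD2 [Hopen [Hcont [H0 [Hint [Hid Hcomp]]]]]]].
  assert (Hts : forall s, 0 <= s -> DPhi x (t + s) /\ Phi (Phi x t) s = Phi x (t + s)).
  { intros s Hs. assert (Hd : DPhi x (t + s)).
    { destruct (Rle_dec 0 (t + s)). apply Hg; lra.
      apply (Hint x t 0); auto; lra. }
    split; [exact Hd|]. apply (Hcomp x t s Hxt Hd). }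
  split; [eauto|]. split.
  - intros s Hs. apply (Hcomp x t s Hxt (proj1 (Hts s Hs))).
  - intros eps He. destruct (Hconv eps He) as [T HT]. exists (Rmax (T - t) 0).
    intros s Hs. pose proof (Rmax_l (T - t) 0). pose proof (Rmax_r (T - t) 0).
    destruct (Hts s ltac:(lra)) as [_ ->]. apply HT. lra.
Qed.

Lemma concat {X Y : Banach} (D : X -> Prop) (f : X -> Y) y0 DPhi Phi z T :
  aux_flow D f y0 DPhi Phi -> DPhi z T -> 0 <= T -> global_future DPhi (Phi z T) ->
  global_future DPhi z.
Proof.
  intros [Hf [Hfp Hmax]] HzT HT Hw.
  pose proof Hf as Hf'.
  destruct Hf' as [HD1 [HD2 [Hopen [Hcont [H0 [Hint [Hid Hcomp]]]]]]].
  set (w := Phi z T) in *.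
  assert (Dz : D z) by eauto.
  assert (Dw : D w) by (apply (HD2 z T HzT)).
  assert (Hzs : forall s, 0 <= s <= T -> DPhi z s).
  { intros s Hs. apply (Hint z 0 T); auto. }
  set (gam := fun s => if Rle_dec s T then Phi z s else Phi w (s - T)).
  assert (G1 : forall s, s <= T -> gam s = Phi z s).
  { intros s Hs; unfold gam; destruct (Rle_dec s T); [reflexivity|lra]. }
  assert (G2 : forall s, T < s -> gam s = Phi w (s - T)).
  { intros s Hs; unfold gam; destruct (Rle_dec s T); [lra|reflexivity]. }
  assert (HwT : Phi w 0 = w) by (apply Hid; exact Dw).
  intros t Ht.
  apply (Hmax z Dz (fun s => 0 <= s) gam).
  - split; [lra|]. intros; lra.
  - rewrite G1 by lra. apply Hid; exact Dz.
  - intros s Hs. destruct (Rle_dec s T).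
    + rewrite G1 by lra. apply (HD2 z s). apply Hzs; lra.
    + rewrite G2 by lra. apply (HD2 w). apply Hw; lra.
  - intros u Hu eps He. destruct (total_order_T u T) as [[Hlt|Heq]|Hgt].
    + destruct (flow_tcont D DPhi Phi z u eps Hf (Hzs u ltac:(lra)) He) as [d [Hd H]].
      exists (Rmin d (T - u)). split. apply Rmin_glb_lt; lra.
      intros s Hs Hsu. pose proof (Rmin_l d (T - u)). pose proof (Rmin_r d (T - u)).
      assert (s < T) by (apply Rabs_def2 in Hsu; lra).
      rewrite !G1 by lra. apply H; [apply Hzs; lra|lra].
    + subst u.
      destruct (flow_tcont D DPhi Phi z T eps Hf HzT He) as [d1 [Hd1 H1]].
      destruct (flow_tcont D DPhi Phi w 0 eps Hf (H0 w Dw) He) as [d2 [Hd2 H2]].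
      exists (Rmin d1 d2). split. apply Rmin_glb_lt; lra.
      intros s Hs Hsu. pose proof (Rmin_l d1 d2). pose proof (Rmin_r d1 d2).
      rewrite (G1 T) by lra. destruct (Rle_dec s T).
      * rewrite G1 by lra. apply H1; [apply Hzs; lra|lra].
      * rewrite G2 by lra. fold w. rewrite <- HwT at 2. apply H2; [apply Hw; lra|].
        replace (s - T - 0) with (s - T) by ring. lra.
    + destruct (flow_tcont D DPhi Phi w (u - T) eps Hf (Hw (u - T) ltac:(lra)) He) as [d [Hd H]].
      exists (Rmin d (u - T)). split. apply Rmin_glb_lt; lra.
      intros s Hs Hsu. pose proof (Rmin_l d (u - T)). pose proof (Rmin_r d (u - T)).
      assert (T < s) by (apply Rabs_def2 in Hsu; lra).
      rewrite !G2 by lra. apply H; [apply Hw; lra|].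
      replace (s - T - (u - T)) with (s - u) by ring. lra.
  - intros s Hs. destruct (Rle_dec s T).
    + rewrite G1 by lra. apply Hfp. apply Hzs; lra.
    + rewrite G2 by lra. rewrite Hfp by (apply Hw; lra).
      unfold w. rewrite Hfp by exact HzT. rewrite Psi_comp. f_equal. ring.
  - exact Ht.
Qed.

Lemma back {X Y : Banach} (D : X -> Prop) (f : X -> Y) y0 DPhi Phi x0 z t :
  aux_flow D f y0 DPhi Phi -> DPhi z t ->
  attraction_basin D DPhi Phi x0 (Phi z t) -> attraction_basin D DPhi Phi x0 z.
Proof.
  intros Ha Hzt HA. pose proof Ha as [Hf _].
  pose proof Hf as Hf'.
  destruct Hf' as [HD1 [HD2 [Hopen [Hcont [H0 [Hint [Hid Hcomp]]]]]]].
  assert (Dz : D z) by eauto.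
  destruct (Rle_dec 0 t) as [Ht|Ht].
  - destruct HA as [Dw [Hgw Hconv]].
    assert (Hg : global_future DPhi z) by (apply (concat D f y0 DPhi Phi z t); auto).
    split; [exact Dz|]. split; [exact Hg|].
    intros eps He. destruct (Hconv eps He) as [T1 HT1]. exists (Rmax (T1 + t) 0).
    intros s Hs. pose proof (Rmax_l (T1 + t) 0). pose proof (Rmax_r (T1 + t) 0).
    destruct (Hcomp z t (s - t) Hzt) as [_ Heq].
    { replace (t + (s - t)) with s by ring. apply Hg; lra. }
    replace (t + (s - t)) with s in Heq by ring. rewrite <- Heq. apply HT1. lra.
  - destruct (Hcomp z t (- t) Hzt) as [Hd Heq].
    { replace (t + - t) with 0 by ring. apply H0; exact Dz. }
    replace (t + - t) with 0 in Heq by ring. rewrite (Hid z Dz) in Heq.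
    rewrite <- Heq. apply part1; auto.
Qed.

Lemma time_to_ball d delta : 0 <= d -> delta > 0 ->
  exists T, 0 <= T /\ forall t, t >= T -> exp (- t) * d < delta.
Proof.
  intros Hd Hdel. set (q := delta / (d + 1)).
  assert (Hq : 0 < q) by (unfold q; apply Rdiv_lt_0_compat; lra).
  exists (Rmax 0 (- ln q)). split; [apply Rmax_l|]. intros t Ht.
  pose proof (Rmax_r 0 (- ln q)).
  assert (exp (- t) <= q).
  { rewrite <- (exp_ln q Hq). destruct (Req_dec (- t) (ln q)) as [->|Hne]; [lra|].
    left. apply exp_increasing. lra. }
  assert (q * d < delta).
  { unfold q. apply (Rmult_lt_reg_r (d + 1)); [lra|].
    field_simplify; [|lra]. nra. }
  pose proof (exp_pos (- t)). nra.
Qed.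

Lemma f_cont {X Y : Banach} (D : X -> Prop) (f : X -> Y) p eps :
  local_homeo D f -> D p -> eps > 0 -> exists d, d > 0 /\
  forall z, dist z p < d -> dist (f z) (f p) < eps.
Proof.
  intros Hlh Dp He.
  destruct (Hlh p Dp) as [U [V [g [HUo [HUp [_ [_ [_ [_ [_ [_ [Hcf _]]]]]]]]]]]].
  destruct (HUo p HUp) as [e1 [He1 HU]].
  destruct (Hcf p HUp eps He) as [d [Hd H]].
  exists (Rmin e1 d). split; [apply Rmin_glb_lt; lra|].
  intros z Hz. pose proof (Rmin_l e1 d). pose proof (Rmin_r e1 d).
  apply H; [apply HU; lra|lra].
Qed.

Definition LD {X Y : Banach} (D : X -> Prop) (f : X -> Y) x0 (U0 : X -> Prop)
  (V0 : Y -> Prop) (g : Y -> X) (r : R) : Prop :=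
  is_open U0 /\ U0 x0 /\ (forall z, U0 z -> D z) /\ (forall z, U0 z -> V0 (f z)) /\
  (forall y, V0 y -> U0 (g y)) /\ (forall z, U0 z -> g (f z) = z) /\
  (forall y, V0 y -> f (g y) = y) /\ cont_on V0 g /\ r > 0 /\
  (forall y, dist y (f x0) < r -> V0 y).

Definition Gset {X Y : Banach} (D : X -> Prop) (f : X -> Y) x0 (g : Y -> X) r z :=
  D z /\ dist (f z) (f x0) < r /\ g (f z) = z.

Lemma G_sub_U0 {X Y : Banach} (D : X -> Prop) (f : X -> Y) x0 U0 V0 g r z :
  LD D f x0 U0 V0 g r -> Gset D f x0 g r z -> U0 z.
Proof.
  intros [_ [_ [_ [_ [HgV [_ [_ [_ [_ Hr]]]]]]]]] [_ [Hz Hgz]].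
  rewrite <- Hgz. apply HgV, Hr, Hz.
Qed.

Lemma G_open {X Y : Banach} (D : X -> Prop) (f : X -> Y) x0 U0 V0 g r p :
  local_homeo D f -> LD D f x0 U0 V0 g r -> Gset D f x0 g r p ->
  exists e, e > 0 /\ forall z, dist z p < e -> Gset D f x0 g r z.
Proof.
  intros Hlh HL Gp. pose proof (G_sub_U0 _ _ _ _ _ _ _ _ HL Gp) as Up.
  destruct HL as [HUo [_ [HUD [_ [_ [Hgf _]]]]]].
  destruct Gp as [Dp [Hfp _]].
  destruct (HUo p Up) as [e1 [He1 HU]].
  destruct (f_cont D f p (r - dist (f p) (f x0)) Hlh Dp ltac:(lra)) as [d [Hd H]].
  exists (Rmin e1 d). split; [apply Rmin_glb_lt; lra|].
  intros z Hz. pose proof (Rmin_l e1 d). pose proof (Rmin_r e1 d).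
  assert (Uz : U0 z) by (apply HU; lra).
  split; [auto|]. split; [|auto].
  pose proof (dist_tri (f z) (f p) (f x0)). pose proof (H z ltac:(lra)). lra.
Qed.

Lemma G_closed {X Y : Banach} (D : X -> Prop) (f : X -> Y) x0 U0 V0 g r p :
  local_homeo D f -> LD D f x0 U0 V0 g r -> D p -> dist (f p) (f x0) < r ->
  (forall eps, eps > 0 -> exists q, Gset D f x0 g r q /\ dist q p < eps) ->
  Gset D f x0 g r p.
Proof.
  intros Hlh HL Dp Hfp Hcl.
  pose proof HL as [_ [_ [_ [_ [_ [_ [_ [Hcg [_ Hr]]]]]]]]].
  split; [exact Dp|]. split; [exact Hfp|].
  apply dist_eq0.
  assert (Hall : forall eps, eps > 0 -> dist (g (f p)) p < eps).
  { intros eps He.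
    destruct (Hcg (f p) (Hr _ Hfp) (eps / 2) ltac:(lra)) as [dg [Hdg Hg]].
    destruct (f_cont D f p dg Hlh Dp Hdg) as [df [Hdf Hf]].
    destruct (Hcl (Rmin df (eps / 2)) ltac:(apply Rmin_glb_lt; lra)) as [q [Gq Hq]].
    pose proof (Rmin_l df (eps / 2)). pose proof (Rmin_r df (eps / 2)).
    destruct Gq as [Dq [Hfq Hgq]].
    pose proof (Hg (f q) (Hr _ Hfq) (Hf q ltac:(lra))) as H1.
    rewrite Hgq in H1. rewrite dist_sym in H1.
    pose proof (dist_tri (g (f p)) q p). lra. }
  destruct (Rle_lt_or_eq_dec 0 _ (dist_nonneg (g (f p)) p)) as [Hlt|Heq]; [|auto].
  pose proof (Hall _ Hlt). lra.
Qed.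

Lemma traj_oc {X Y : Banach} (D : X -> Prop) (f : X -> Y) x0 DPhi Phi U0 V0 g r z a b :
  aux_flow D f (f x0) DPhi Phi -> local_homeo D f -> LD D f x0 U0 V0 g r ->
  global_future DPhi z -> dist (f z) (f x0) < r -> 0 <= a ->
  (forall t, a <= t <= b -> Gset D f x0 g r (Phi z t) -> exists d, d > 0 /\
     forall s, a <= s <= b -> Rabs (s - t) < d -> Gset D f x0 g r (Phi z s)) /\
  (forall t, a <= t <= b -> (forall d, d > 0 -> exists s, a <= s <= b /\ Rabs (s - t) < d /\
      Gset D f x0 g r (Phi z s)) -> Gset D f x0 g r (Phi z t)).
Proof.
  intros [Hf [Hfp _]] Hlh HL Hg Hfz Ha.
  pose proof Hf as [HD1 [HD2 _]].
  assert (Hfb : forall s, 0 <= s -> dist (f (Phi z s)) (f x0) < r).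
  { intros s Hs. rewrite Hfp by (apply Hg; lra). rewrite dist_Psi_y0.
    assert (exp (- s) <= 1).
    { rewrite <- exp_0. destruct (Req_dec s 0) as [->|]; [rewrite Ropp_0; lra|].
      left; apply exp_increasing; lra. }
    pose proof (dist_nonneg (f z) (f x0)). pose proof (exp_pos (- s)). nra. }
  split.
  - intros t Ht Gt. destruct (G_open D f x0 U0 V0 g r _ Hlh HL Gt) as [e [He H]].
    destruct (flow_tcont D DPhi Phi z t e Hf (Hg t ltac:(lra)) He) as [d [Hd Hc]].
    exists d. split; [exact Hd|]. intros s Hs Hst. apply H, Hc; [apply Hg; lra|exact Hst].
  - intros t Ht Hcl. apply (G_closed D f x0 U0 V0 g r _ Hlh HL).
    + apply (HD2 z t), Hg; lra.
    + apply Hfb; lra.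
    + intros eps He. destruct (flow_tcont D DPhi Phi z t eps Hf (Hg t ltac:(lra)) He) as [d [Hd Hc]].
      destruct (Hcl d Hd) as [s [Hs [Hst Gs]]]. exists (Phi z s). split; [exact Gs|].
      apply Hc; [apply Hg; lra|exact Hst].
Qed.

Lemma G_in_A {X Y : Banach} (D : X -> Prop) (f : X -> Y) x0 DPhi Phi U0 V0 g r z :
  aux_flow D f (f x0) DPhi Phi -> local_homeo D f -> LD D f x0 U0 V0 g r ->
  Gset D f x0 g r z -> attraction_basin D DPhi Phi x0 z.
Proof.
  intros Hax Hlh HL Gz. pose proof Hax as [Hf [Hfp Hmax]].
  pose proof Hf as [HD1 [HD2 [_ [_ [H0 [_ [Hid _]]]]]]].
  pose proof HL as [HUo [HUx0 [HUD [HfV [HgV [Hgf [Hfg [Hcg [Hr0 Hr]]]]]]]]].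
  pose proof Gz as [Dz [Hfz Hgz]].
  assert (HPin : forall s, 0 <= s -> dist (Psi (f x0) (f z) s) (f x0) < r).
  { intros s Hs. rewrite dist_Psi_y0.
    assert (exp (- s) <= 1).
    { rewrite <- exp_0. destruct (Req_dec s 0) as [->|]; [rewrite Ropp_0; lra|].
      left; apply exp_increasing; lra. }
    pose proof (dist_nonneg (f z) (f x0)). pose proof (exp_pos (- s)). nra. }
  assert (Hg : global_future DPhi z).
  { intros t Ht.
    apply (Hmax z Dz (fun s => 0 <= s) (fun s => g (Psi (f x0) (f z) s))).
    - split; [lra|]. intros; lra.
    - simpl. rewrite Psi_0. exact Hgz.
    - intros s Hs. apply HUD, HgV, Hr, HPin, Hs.
    - intros u Hu eps He.
      destruct (Hcg _ (Hr _ (HPin u Hu)) eps He) as [dg [Hdg Hc]].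
      destruct (expneg_cont u (dg / (dist (f z) (f x0) + 1))) as [d [Hd He2]].
      { apply Rdiv_lt_0_compat; [lra|]. pose proof (dist_nonneg (f z) (f x0)); lra. }
      exists d. split; [exact Hd|]. intros s Hs Hsu. apply Hc; [apply Hr, HPin, Hs|].
      rewrite dist_Psi_Psi. specialize (He2 s Hsu).
      pose proof (dist_nonneg (f z) (f x0)) as Hn.
      pose proof (Rabs_pos (exp (- s) - exp (- u))).
      apply (Rmult_lt_compat_r (dist (f z) (f x0) + 1)) in He2; [|lra].
      unfold Rdiv in He2. rewrite Rmult_assoc, Rinv_l in He2 by lra. nra.
    - intros s Hs. apply Hfg, Hr, HPin, Hs.
    - exact Ht. }
  assert (HP : forall b, 0 <= b -> Gset D f x0 g r (Phi z b)).
  { intros b Hb. destruct (traj_oc D f x0 DPhi Phi U0 V0 g r z 0 b Hax Hlh HL Hg Hfz ltac:(lra))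
      as [Ho Hc].
    apply (conn_fwd (fun s => Gset D f x0 g r (Phi z s)) 0 b Hb); auto.
    simpl. rewrite Hid by exact Dz. exact Gz. }
  split; [exact Dz|]. split; [exact Hg|].
  intros eps He.
  destruct (Hcg (f x0) (Hr _ ltac:(rewrite dist_self; lra)) eps He) as [dg [Hdg Hc]].
  destruct (time_to_ball (dist (f z) (f x0)) dg (dist_nonneg _ _) Hdg) as [T [HT0 HT]].
  exists T. intros t Ht. destruct (HP t ltac:(lra)) as [_ [_ Hgt]].
  rewrite <- Hgt, Hfp by (apply Hg; lra).
  assert (Hc' := Hc (Psi (f x0) (f z) t) (Hr _ (HPin t ltac:(lra)))
     ltac:(rewrite dist_Psi_y0; apply HT, Ht)).
  rewrite (Hgf x0 HUx0) in Hc'. exact Hc'.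
Qed.

Lemma A_to_G {X Y : Banach} (D : X -> Prop) (f : X -> Y) x0 DPhi Phi U0 V0 g r q :
  aux_flow D f (f x0) DPhi Phi -> local_homeo D f -> LD D f x0 U0 V0 g r ->
  attraction_basin D DPhi Phi x0 q -> dist (f q) (f x0) < r -> Gset D f x0 g r q.
Proof.
  intros Hax Hlh HL [Dq [Hg Hconv]] Hfq.
  pose proof Hax as [Hf _]. pose proof Hf as [_ [_ [_ [_ [_ [_ [Hid _]]]]]]].
  pose proof HL as [HUo [HUx0 [HUD [HfV [HgV [Hgf [Hfg [Hcg [Hr0 Hr]]]]]]]]].
  assert (Gx0 : Gset D f x0 g r x0).
  { split; [auto|]. split; [rewrite dist_self; lra|auto]. }
  destruct (G_open D f x0 U0 V0 g r x0 Hlh HL Gx0) as [e [He HG]].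
  destruct (Hconv e He) as [T HT].
  set (b := Rmax T 0). pose proof (Rmax_l T 0). pose proof (Rmax_r T 0).
  destruct (traj_oc D f x0 DPhi Phi U0 V0 g r q 0 b Hax Hlh HL Hg Hfq ltac:(lra)) as [Ho Hc].
  pose proof (conn_bwd (fun s => Gset D f x0 g r (Phi q s)) 0 b ltac:(unfold b; lra)) as Hb.
  simpl in Hb. rewrite Hid in Hb by exact Dq. apply Hb; auto.
  apply HG, HT. unfold b; lra.
Qed.

Theorem lemma2p2 (X Y : Banach) (D : X -> Prop) (f : X -> Y) (x0 : X)
    (DPhi : X -> R -> Prop) (Phi : X -> R -> X) :
  (exists x, D x) -> is_open D -> connected D ->
  local_homeo D f -> D x0 ->
  aux_flow D f (f x0) DPhi Phi ->
  let A := attraction_basin D DPhi Phi x0 in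
  (forall x t, A x -> DPhi x t -> A (Phi x t)) /\
  (forall x t, rel_boundary D A x -> DPhi x t -> rel_boundary D A (Phi x t)) /\
  (forall x, rel_boundary D A x -> ~ global_future DPhi x).
Proof.
  intros _ _ _ Hlh Dx0 Hax A. unfold A.
  pose proof Hax as [Hf [Hfp Hmax]].
  pose proof Hf as [HD1 [HD2 [Hopen [Hcont [H0 [Hint [Hid Hcomp]]]]]]].
  destruct (Hlh x0 Dx0) as [U0 [V0 [g [HUo [HUx0 [HUD [HVo [HfV [HgV [Hgf [Hfg [_ Hcg]]]]]]]]]]]].
  destruct (HVo (f x0) (HfV x0 HUx0)) as [r [Hr0 Hr]].
  assert (HL : LD D f x0 U0 V0 g r).
  { repeat split; auto. }
  assert (Hnear : forall x t eps, DPhi x t -> eps > 0 -> exists d, d > 0 /\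
     forall z, dist z x < d -> DPhi z t /\ dist (Phi z t) (Phi x t) < eps).
  { intros x t eps Hxt He. destruct (Hcont x t Hxt eps He) as [d1 [Hd1 H1]].
    destruct (Hopen x t Hxt) as [e2 [He2 H2]].
    exists (Rmin d1 e2). split; [apply Rmin_glb_lt; lra|].
    intros z Hz. pose proof (Rmin_l d1 e2). pose proof (Rmin_r d1 e2).
    assert (DPhi z t) by (apply H2; [lra|unfold Rminus; rewrite Rplus_opp_r, Rabs_R0; lra]).
    split; [auto|]. apply H1; auto; [lra|unfold Rminus; rewrite Rplus_opp_r, Rabs_R0; lra]. }
  split; [|split].
  - intros x t HA Hxt. apply part1; auto.
  - intros x t [Dx [HAn HnAn]] Hxt. split; [apply (HD2 x t Hxt)|]. split.
    + intros eps He. destruct (Hnear x t eps Hxt He) as [d [Hd H]].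
      destruct (HAn d Hd) as [a [Aa Ha]]. destruct (H a Ha) as [Hat Hdist].
      exists (Phi a t). split; [apply part1; auto|exact Hdist].
    + intros eps He. destruct (Hnear x t eps Hxt He) as [d [Hd H]].
      destruct (HnAn d Hd) as [z [Dz [nAz Hz]]]. destruct (H z Hz) as [Hzt Hdist].
      exists (Phi z t). split; [apply (HD2 z t Hzt)|]. split; [|exact Hdist].
      intro HAz. apply nAz. apply (back D f (f x0) DPhi Phi x0 z t); auto.
  - intros x [Dx [HAn HnAn]] Hg.
    destruct (time_to_ball (dist (f x) (f x0)) r (dist_nonneg _ _) Hr0) as [T [HT0 HT]].
    assert (HxT : DPhi x T) by (apply Hg; lra).
    set (p := Phi x T).
    assert (Hfp' : dist (f p) (f x0) < r).
    { unfold p. rewrite Hfp by exact HxT. rewrite dist_Psi_y0. apply HT; lra. }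
    assert (Gp : Gset D f x0 g r p).
    { apply (G_closed D f x0 U0 V0 g r p Hlh HL (HD2 x T HxT) Hfp').
      intros eps He.
      destruct (f_cont D f p (r - dist (f p) (f x0)) Hlh (HD2 x T HxT) ltac:(lra)) as [df [Hdf Hfc]].
      destruct (Hnear x T (Rmin eps df) HxT ltac:(apply Rmin_glb_lt; lra)) as [d [Hd H]].
      pose proof (Rmin_l eps df). pose proof (Rmin_r eps df).
      destruct (HAn d Hd) as [a [Aa Ha]]. destruct (H a Ha) as [HaT Hdist].
      exists (Phi a T). split; [|fold p in Hdist; lra].
      apply (A_to_G D f x0 DPhi Phi U0 V0 g r); auto.
      + apply part1; auto.
      + pose proof (Hfc (Phi a T) ltac:(fold p in Hdist; lra)).
        pose proof (dist_tri (f (Phi a T)) (f p) (f x0)). lra. }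
    destruct (G_open D f x0 U0 V0 g r p Hlh HL Gp) as [e [He HG]].
    destruct (Hnear x T e HxT He) as [d [Hd H]].
    destruct (HnAn d Hd) as [z [Dz [nAz Hz]]]. destruct (H z Hz) as [HzT Hdist].
    apply nAz. apply (back D f (f x0) DPhi Phi x0 z T); auto.
    apply (G_in_A D f x0 DPhi Phi U0 V0 g r); auto.
Qed.
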